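(* $M^L(6)\le 15$.
   Context: $\mathbb{F}=\{0,1\}$. The binary $n$-dimensional hypercube $\mathbb{F}^n$ is the graph on $\mathbb{F}^n$ where two words are adjacent iff their Hamming distance is $1$. For a nonempty $C\subseteq\mathbb{F}^n$, $I(\mathbf{x})=N[\mathbf{x}]\cap C$ with $N[\mathbf{x}]$ the words at Hamming distance $\le1$ from $\mathbf{x}$. $C$ is a local identifying code if $I(\mathbf{x})\ne\emptyset$ for all $\mathbf{x}$ and $I(\mathbf{x})\ne I(\mathbf{y})$ for all adjacent $\mathbf{x},\mathbf{y}$. $M^L(n)$ is the minimum cardinality of a local identifying code in $\mathbb{F}^n$. *)

(* Defs.v *)
From mathcomp Require Import all_boot.
Set Implicit Arguments. Unset Strict Implicit. Unset Printing Implicit Defensive.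

(* Words of the binary n-dimensional hypercube F^n, F = {0,1} = bool. *)
Definition word (n : nat) := {ffun 'I_n -> bool}.

Definition hdist n (x y : word n) : nat := #|[set i : 'I_n | x i != y i]|.

Definition closed_nbhd n (x : word n) : {set word n} :=
  [set y : word n | hdist x y <= 1].

Definition Iset n (C : {set word n}) (x : word n) : {set word n} :=
  closed_nbhd x :&: C.

Definition local_id_code n (C : {set word n}) : bool :=
  [&& C != set0,
      [forall x : word n, Iset C x != set0] &
      [forall x : word n, forall y : word n,
         (hdist x y == 1) ==> (Iset C x != Iset C y)]].

(* M^L(n): minimum cardinality of a local identifying code in F^n
   (if none exists, the value defaults to 2^n + 1 = #|word n|.+1). *)
Definition ML (n : nat) : nat :=
  \big[minn/#|{: word n}|.+1]_(C : {set word n} | local_id_code C) #|C|.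

(* Main.v *)
Require Import Defs.
From mathcomp Require Import all_boot.

Definition w (k : nat) : word 6 := [ffun i : 'I_6 => odd (k %/ 2^i)].
Definition hdc (k m : nat) : nat :=
  count (fun i : nat => odd (k %/ 2^i) != odd (m %/ 2^i)) (iota 0 6).
Definition sC : seq nat := [:: 2; 5; 10; 14; 20; 25; 32; 36; 37; 51; 52; 55; 57; 59; 63].
Definition C : {set word 6} := [set x in map w sC].

Lemma hdE k m : hdist (w k) (w m) = hdc k m.
Proof.
rewrite /hdist cardsE cardE /enum_mem size_filter /hdc -enumT -val_enum_ord count_map.
apply: eq_count => i /=. by rewrite unfold_in /w !ffunE.
Qed.

Lemma hdist0 (x : word 6) : hdist x x = 0.
Proof. by apply/eqP; rewrite /hdist cards_eq0; apply/eqP/setP => i; rewrite !inE eqxx. Qed.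


Lemma bigmin_le (I : eqType) (r : seq I) (P : pred I) (F : I -> nat) x0 j :
  j \in r -> P j -> \big[minn/x0]_(i <- r | P i) F i <= F j.
Proof.
elim: r => [|a r IH] //; rewrite inE big_cons => /orP [/eqP <-|jr] Pj.
  by rewrite Pj geq_minl.
case: ifP => _; last exact: IH.
by rewrite (leq_trans (geq_minr _ _)) // IH.
Qed.

Lemma ML_le (D : {set word 6}) : local_id_code D -> ML 6 <= #|D|.
Proof. by move=> h; rewrite /ML; apply: bigmin_le => //; rewrite mem_index_enum. Qed.


Definition chk_inj := all (fun k => all (fun l => (hdc k l == 0) ==> (k == l)) (iota 0 64)) (iota 0 64).
Lemma chk_inj_ok : chk_inj. Proof. by vm_compute. Qed.

Lemma wK (k l : nat) : k < 64 -> l < 64 -> w k = w l -> k = l.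
Proof.
move=> hk hl E; have h0 : hdc k l == 0 by rewrite -hdE E hdist0.
have /allP/(_ k) := chk_inj_ok; rewrite mem_iota hk => /(_ isT) /allP/(_ l).
by rewrite mem_iota hl => /(_ isT) /implyP/(_ h0) /eqP.
Qed.

Lemma wsurj (x : word 6) : exists2 k, k < 64 & x = w k.
Proof.
pose A : {set word 6} := [set y in map w (iota 0 64)].
have uA : uniq (map w (iota 0 64)).
  rewrite map_inj_in_uniq ?iota_uniq // => a b; rewrite !mem_iota => ha hb.
  exact: wK.
have cA : #|A| = 64 by rewrite cardsE (card_uniqP uA) size_map size_iota.
have : A == setT by rewrite eqEcard subsetT cardsT card_ffun card_bool card_ord cA.
move/eqP => eA; have : x \in A by rewrite eA inE.
rewrite inE => /mapP [k]; rewrite mem_iota => hk ->; by exists k.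
Qed.

Lemma sC_lt j : j \in sC -> j < 64.
Proof. have: all (fun j => j < 64) sC by []. by move/allP; apply. Qed.

Lemma memC m : m < 64 -> (w m \in C) = (m \in sC).
Proof.
move=> hm; rewrite inE; apply/mapP/idP => [[j js E]|ms]; last by exists m.
have hj : j < 64 by apply: sC_lt.
by rewrite (@wK m j hm hj E).
Qed.

Lemma memI k m : m < 64 -> (w m \in Iset C (w k)) = (hdc k m <= 1) && (m \in sC).
Proof. by move=> hm; rewrite /Iset in_setI memC // /closed_nbhd inE hdE. Qed.

Definition memb k m := (hdc k m <= 1) && (m \in sC).
Definition chk_dom := all (fun k => has (memb k) (iota 0 64)) (iota 0 64).
Lemma chk_dom_ok : chk_dom. Proof. by vm_compute. Qed.
Definition chk_sep := all (fun k => all (fun l => (hdc k l == 1) ==>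
   has (fun m => memb k m != memb l m) (iota 0 64)) (iota 0 64)) (iota 0 64).
Lemma chk_sep_ok : chk_sep. Proof. by vm_compute. Qed.

Lemma C_code : local_id_code C.
Proof.
apply/and3P; split.
- by apply/set0Pn; exists (w 2); rewrite memC.
- apply/forallP => x; have [k hk ->] := wsurj x.
  have /allP/(_ k) := chk_dom_ok; rewrite mem_iota hk => /(_ isT) /hasP [m].
  rewrite mem_iota => /andP [_ hm] hM.
  by apply/set0Pn; exists (w m); rewrite memI.
- apply/forallP => x; apply/forallP => y.
  have [k hk ->] := wsurj x; have [l hl ->] := wsurj y.
  rewrite hdE; apply/implyP => h1.
  have /allP/(_ k) := chk_sep_ok; rewrite mem_iota hk => /(_ isT) /allP/(_ l).
  rewrite mem_iota hl => /(_ isT) /implyP/(_ h1) /hasP [m].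
  rewrite mem_iota => /andP [_ hm] hM.
  apply/negP => /eqP E; move: hM; by rewrite /memb -!memI // E eqxx.
Qed.

Theorem mainTheorem9 : ML 6 <= 15.
Proof.
have -> : 15 = #|C| by rewrite cardsE (card_uniqP _) ?size_map //; apply: (map_inj_in_uniq (f:=w)) => // a b; move=> ha hb; apply: wK; exact: sC_lt.
exact: ML_le C_code.
Qed.
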